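(* Let $X=\{0,1\}$ with the graph $0-1$ (arrows $0\to1$ and $1\to0$), $A=\mathbb{F}_2(X)$, and take $\Omega^2=\Omega^1\otimes_A\Omega^1$ (no relations, $\wedge$ the identity map). Then there is a unique bimodule connection on $\Omega^1$ with invertible generalised braiding $\sigma$, namely $\nabla(01)=\nabla(10)=g$, $\sigma=\mathrm{id}$. This is also the unique metric compatible bimodule connection, and it has $T_\nabla=0$ (so it is a QLC) and $R_\nabla=0$.
   Context: Notation: $ij$ denotes the arrow $i\to j$ and $i_0i_1\cdots i_m$ the path $i_0\to i_1\to\cdots\to i_m$; $\Omega^1$ is the $\mathbb{F}_2$-vector space with basis the arrows, with bimodule structure $f\cdot(x\to y)\cdot h=f(x)h(y)\,(x\to y)$ and ${\rm d} f=\sum_{x\to y}(f(y)+f(x))\,x\to y$. Tensor powers $\Omega^1\otimes_A\cdots\otimes_A\Omega^1$ have basis the paths of the corresponding length, a path corresponding to the tensor product of its steps (tensor products of non-composable steps are zero). Let $\theta=01+10$; the differential on 1-forms is ${\rm d}\omega=\theta\otimes\omega+\omega\otimes\theta$. The quantum metric is $g=010+101$. A bimodule connection is a linear map $\nabla:\Omega^1\to\Omega^1\otimes_A\Omega^1$ with $\nabla(f\omega)={\rm d} f\otimes\omega+f\nabla\omega$ and $\nabla(\omega f)=(\nabla\omega)f+\sigma(\omega\otimes{\rm d} f)$ for some bimodule map $\sigma:\Omega^1\otimes_A\Omega^1\to\Omega^1\otimes_A\Omega^1$. It is metric compatible if $(\nabla\otimes\mathrm{id}+(\sigma\otimes\mathrm{id})(\mathrm{id}\otimes\nabla))g=0$.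 Torsion $T_\nabla=\wedge\nabla-{\rm d}$ and curvature $R_\nabla=({\rm d}\otimes\mathrm{id}-(\wedge\otimes\mathrm{id})(\mathrm{id}\otimes\nabla))\nabla:\Omega^1\to\Omega^2\otimes_A\Omega^1$ (signs irrelevant over $\mathbb{F}_2$). A QLC is a torsion free, metric compatible bimodule connection. *)

(* Defs.v *)
From HB Require Import structures.
From mathcomp Require Import all_boot all_order all_algebra.
Set Implicit Arguments. Unset Strict Implicit. Unset Printing Implicit Defensive.
Import GRing.Theory.
Local Open Scope ring_scope.

Definition X := 'I_2.
Definition v0 : X := @ord0 1.
Definition v1 : X := @ord_max 1.

Definition arr := {p : X * X | p.1 != p.2}.
Definition path2 := {t : X * X * X | (t.1.1 != t.1.2) && (t.1.2 != t.2)}.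
Definition path3 :=
  {t : X * X * X * X | [&& t.1.1.1 != t.1.1.2, t.1.1.2 != t.1.2 & t.1.2 != t.2]}.

(* algebra of functions, and forms: F_2-valued coefficient functions on paths.
   Omega2 = Omega1 (x)_A Omega1 (no relations, wedge = id),
   Omega3 = Omega2 (x)_A Omega1 = Omega1 (x)_A Omega2. *)
Definition A := {ffun X -> 'F_2}.
Definition Omega1 := {ffun arr -> 'F_2}.
Definition Omega2 := {ffun path2 -> 'F_2}.
Definition Omega3 := {ffun path3 -> 'F_2}.

Definition coef1 (w : Omega1) (x y : X) : 'F_2 :=
  if @insub _ (fun p : X * X => p.1 != p.2) arr (x, y) is Some a then w a else 0.
Definition coef2 (t : Omega2) (x y z : X) : 'F_2 :=
  if @insub _ (fun t : X * X * X => (t.1.1 != t.1.2) && (t.1.2 != t.2)) path2 (x, y, z)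
  is Some p then t p else 0.

Definition e1 (x y : X) : Omega1 := [ffun a : arr => ((val a == (x, y)) : nat)%:R].
Definition e2 (x y z : X) : Omega2 :=
  [ffun p : path2 => ((val p == (x, y, z)) : nat)%:R].

(* tensor products over A (product of coefficients along composable steps) *)
Definition tens11 (w u : Omega1) : Omega2 :=
  [ffun p : path2 => coef1 w (val p).1.1 (val p).1.2 * coef1 u (val p).1.2 (val p).2].
Definition tens21 (t : Omega2) (u : Omega1) : Omega3 :=
  [ffun q : path3 => coef2 t (val q).1.1.1 (val q).1.1.2 (val q).1.2
                     * coef1 u (val q).1.2 (val q).2].
Definition tens12 (w : Omega1) (t : Omega2) : Omega3 :=
  [ffun q : path3 => coef1 w (val q).1.1.1 (val q).1.1.2
                     * coef2 t (val q).1.1.2 (val q).1.2 (val q).2].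

Definition lact1 (f : A) (w : Omega1) : Omega1 := [ffun a : arr => f (val a).1 * w a].
Definition ract1 (w : Omega1) (f : A) : Omega1 := [ffun a : arr => w a * f (val a).2].
Definition lact2 (f : A) (t : Omega2) : Omega2 :=
  [ffun p : path2 => f (val p).1.1 * t p].
Definition ract2 (t : Omega2) (f : A) : Omega2 :=
  [ffun p : path2 => t p * f (val p).2].

Definition F2linear (I J : finType) (F : {ffun I -> 'F_2} -> {ffun J -> 'F_2}) :=
  forall (c : 'F_2) (u v : {ffun I -> 'F_2}),
    F ([ffun i => c * u i] + v) = [ffun j => c * F u j] + F v.

Definition theta : Omega1 := e1 v0 v1 + e1 v1 v0.
Definition gmet : Omega2 := e2 v0 v1 v0 + e2 v1 v0 v1.
Definition d0 (f : A) : Omega1 := [ffun a : arr => f (val a).2 + f (val a).1].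
Definition d1 (w : Omega1) : Omega2 := tens11 theta w + tens11 w theta.

Definition is_bimod_conn (nabla : Omega1 -> Omega2) (sigma : Omega2 -> Omega2) : Prop :=
  [/\ F2linear nabla,
      (forall (f : A) (w : Omega1), nabla (lact1 f w) = tens11 (d0 f) w + lact2 f (nabla w)),
      (forall (f : A) (w : Omega1),
          nabla (ract1 w f) = ract2 (nabla w) f + sigma (tens11 w (d0 f))),
      F2linear sigma &
      (forall (f : A) (t : Omega2),
          sigma (lact2 f t) = lact2 f (sigma t) /\ sigma (ract2 t f) = ract2 (sigma t) f)].

(* (sigma (x) id) on Omega2 (x)_A Omega1 = 3-paths: xyzw = (xyz) (x) (zw) *)
Definition sigma_id (sigma : Omega2 -> Omega2) (q : Omega3) : Omega3 :=
  [ffun r : path3 => \sum_(s : path3)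
      q s * tens21 (sigma (e2 (val s).1.1.1 (val s).1.1.2 (val s).1.2))
                   (e1 (val s).1.2 (val s).2) r].

(* metric compatibility: (nabla (x) id + (sigma (x) id)(id (x) nabla)) g = 0,
   computed on the expansion g = sum_p g(xyz) (xy) (x) (yz) *)
Definition metric_compatible (nabla : Omega1 -> Omega2) (sigma : Omega2 -> Omega2) : Prop :=
  \sum_(p : path2)
     [ffun r : path3 => gmet p *
        (tens21 (nabla (e1 (val p).1.1 (val p).1.2)) (e1 (val p).1.2 (val p).2)
         + sigma_id sigma (tens12 (e1 (val p).1.1 (val p).1.2)
                                  (nabla (e1 (val p).1.2 (val p).2)))) r] = 0.

(* torsion T = wedge nabla - d, wedge = id *)
Definition torsion (nabla : Omega1 -> Omega2) (w : Omega1) : Omega2 := nabla w - d1 w.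

(* curvature R = (d (x) id - (wedge (x) id)(id (x) nabla)) nabla : Omega1 -> Omega2 (x)_A Omega1,
   computed on the expansion nabla w = sum_p (nabla w)(xyz) (xy) (x) (yz) *)
Definition curvature (nabla : Omega1 -> Omega2) (w : Omega1) : Omega3 :=
  \sum_(p : path2)
     [ffun r : path3 => nabla w p *
        (tens21 (d1 (e1 (val p).1.1 (val p).1.2)) (e1 (val p).1.2 (val p).2)
         - tens12 (e1 (val p).1.1 (val p).1.2) (nabla (e1 (val p).1.2 (val p).2))) r].

(* Main.v *)
Require Import Defs.
From mathcomp Require Import all_boot all_order all_algebra.
Import GRing.Theory.
Set Implicit Arguments.
Local Open Scope ring_scope.
Definition a01 : arr := exist _ (v0, v1) isT.
Definition a10 : arr := exist _ (v1, v0) isT.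
Definition p010 : path2 := exist _ (v0, v1, v0) isT.
Definition p101 : path2 := exist _ (v1, v0, v1) isT.
Definition q0101 : path3 := exist _ (v0, v1, v0, v1) isT.
Definition q1010 : path3 := exist _ (v1, v0, v1, v0) isT.

Lemma X_cases (x : X) : x = v0 \/ x = v1.
Proof. case: x => [[|[|m]] Hm]; [left|right|by []]; exact: val_inj. Qed.

Lemma arr_cases (a : arr) : a = a01 \/ a = a10.
Proof.
case: a => [[x y] H]; case: (X_cases x) => ?; case: (X_cases y) => ?; subst => //;
  [left|right]; exact: val_inj.
Qed.
Lemma path2_cases (p : path2) : p = p010 \/ p = p101.
Proof.
case: p => [[[x y] z] H]; case: (X_cases x) => ?; case: (X_cases y) => ?;
  case: (X_cases z) => ?; subst => //; [left|right]; exact: val_inj.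
Qed.
Lemma path3_cases (p : path3) : p = q0101 \/ p = q1010.
Proof.
case: p => [[[[x y] z] u] H]; case: (X_cases x) => ?; case: (X_cases y) => ?;
  case: (X_cases z) => ?; case: (X_cases u) => ?; subst => //; [left|right]; exact: val_inj.
Qed.
Lemma F2_cases (c : 'F_2) : c = 0 \/ c = 1.
Proof. case: c => [[|[|m]] Hm]; [left|right|by []]; exact: val_inj. Qed.

Lemma coef1_01 w : Defs.coef1 w v0 v1 = w a01.
Proof. rewrite /Defs.coef1; case: insubP => [u _ Eu|H] /=; [congr (w _); exact: val_inj | by []]. Qed.
Lemma coef1_10 w : Defs.coef1 w v1 v0 = w a10.
Proof. rewrite /Defs.coef1; case: insubP => [u _ Eu|H] /=; [congr (w _); exact: val_inj | by []]. Qed.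
Lemma coef1_00 w : Defs.coef1 w v0 v0 = 0.
Proof. by rewrite /Defs.coef1 insubF. Qed.
Lemma coef1_11 w : Defs.coef1 w v1 v1 = 0.
Proof. by rewrite /Defs.coef1 insubF. Qed.
Lemma coef2_010 t : coef2 t v0 v1 v0 = t p010.
Proof. rewrite /coef2; case: insubP => [u _ Eu|H] /=; [congr (t _); exact: val_inj | by []]. Qed.
Lemma coef2_101 t : coef2 t v1 v0 v1 = t p101.
Proof. rewrite /coef2; case: insubP => [u _ Eu|H] /=; [congr (t _); exact: val_inj | by []]. Qed.
Lemma coef2_0 t x y z : ~~ ((x != y) && (y != z)) -> coef2 t x y z = 0.
Proof. by move=> H; rewrite /coef2 insubF //; apply: negbTE. Qed.
Lemma sum2 (V : nmodType) (F : path2 -> V) : \sum_(p : path2) F p = F p010 + F p101.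
Proof.
rewrite (bigD1 p010) //=; congr (_ + _); apply: big_pred1 => p /=.
by case: (path2_cases p) => ->.
Qed.
Lemma sum3 (V : nmodType) (F : path3 -> V) : \sum_(p : path3) F p = F q0101 + F q1010.
Proof.
rewrite (bigD1 q0101) //=; congr (_ + _); apply: big_pred1 => p /=.
by case: (path3_cases p) => ->.
Qed.
From mathcomp Require Import ring.

Ltac norm := rewrite /theta /gmet /d1 /d0 /tens11 /tens21 /tens12 /lact1 /ract1 /lact2 /ract2 /e1 /e2 /torsion /curvature /metric_compatible /sigma_id;
  do 4! (rewrite ?sum2 ?sum3 ?sum_ffunE ?ffunE /= ?coef1_01 ?coef1_10 ?coef1_00 ?coef1_11 ?coef2_010 ?coef2_101).

Ltac f2atoms := repeat match goal with
  |- context [fun_of_fin ?f ?x] => is_var f; case: (F2_cases (fun_of_fin f x)) => ->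
  end.

Definition cN (w : Omega1) : Omega2 := [ffun p : path2 => (w a01 + w a10) * gmet p].

Lemma ex1 : cN (e1 v0 v1) = gmet.
Proof. apply/ffunP => p; case: (path2_cases p) => ->; rewrite /cN; norm; by apply/eqP. Qed.

Lemma ex_left (f : A) (w : Omega1) : cN (lact1 f w) = tens11 (d0 f) w + lact2 f (cN w).
Proof. apply/ffunP => p; case: (path2_cases p) => ->; rewrite /cN; norm; f2atoms; by apply/eqP. Qed.
Lemma ex_right (f : A) (w : Omega1) : cN (ract1 w f) = ract2 (cN w) f + id (tens11 w (d0 f)).
Proof. apply/ffunP => p; case: (path2_cases p) => ->; rewrite /cN; norm; f2atoms; by apply/eqP. Qed.
Lemma ex_lin : F2linear cN.
Proof. move=> c u v; apply/ffunP => p; case: (path2_cases p) => ->; rewrite /cN; norm; case: (F2_cases c) => ->; f2atoms; by apply/eqP. Qed.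
Lemma ex2 : cN (e1 v1 v0) = gmet.
Proof. apply/ffunP => p; case: (path2_cases p) => ->; rewrite /cN; norm; by apply/eqP. Qed.
Lemma ex_conn : is_bimod_conn cN id.
Proof. split; [exact: ex_lin | exact: ex_left | exact: ex_right | by [] | by []]. Qed.
Lemma ex_mc : metric_compatible cN id.
Proof. rewrite /metric_compatible sum2 /= ex1 ex2. apply/ffunP => q; case: (path3_cases q) => ->; norm; by apply/eqP. Qed.
Lemma ex_tor w : torsion cN w = 0.
Proof. apply/ffunP => p; case: (path2_cases p) => ->; rewrite /cN; norm; f2atoms; by apply/eqP. Qed.
Lemma ex_curv w : curvature cN w = 0.
Proof. rewrite /curvature sum2 /= ex1 ex2. apply/ffunP => q; case: (path3_cases q) => ->; rewrite /cN; norm; f2atoms; by apply/eqP. Qed.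

Definition dl0 : A := [ffun x => ((x == v0) : nat)%:R].
Definition dl1 : A := [ffun x => ((x == v1) : nat)%:R].

Ltac norm2 := rewrite /dl0 /dl1; norm.

Lemma hl01 : lact1 dl0 (e1 v0 v1) = e1 v0 v1.
Proof. apply/ffunP => p; case: (arr_cases p) => ->; norm2; by apply/eqP. Qed.
Lemma hl10 : lact1 dl1 (e1 v1 v0) = e1 v1 v0.
Proof. apply/ffunP => p; case: (arr_cases p) => ->; norm2; by apply/eqP. Qed.
Lemma hr01 : ract1 (e1 v0 v1) dl1 = e1 v0 v1.
Proof. apply/ffunP => p; case: (arr_cases p) => ->; norm2; by apply/eqP. Qed.
Lemma hr10 : ract1 (e1 v1 v0) dl0 = e1 v1 v0.
Proof. apply/ffunP => p; case: (arr_cases p) => ->; norm2; by apply/eqP. Qed.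
Lemma ht01 : tens11 (e1 v0 v1) (d0 dl1) = e2 v0 v1 v0.
Proof. apply/ffunP => p; case: (path2_cases p) => ->; norm2; by apply/eqP. Qed.
Lemma ht10 : tens11 (e1 v1 v0) (d0 dl0) = e2 v1 v0 v1.
Proof. apply/ffunP => p; case: (path2_cases p) => ->; norm2; by apply/eqP. Qed.
Lemma hs010 : lact2 dl0 (e2 v0 v1 v0) = e2 v0 v1 v0.
Proof. apply/ffunP => p; case: (path2_cases p) => ->; norm2; by apply/eqP. Qed.
Lemma hs101 : lact2 dl1 (e2 v1 v0 v1) = e2 v1 v0 v1.
Proof. apply/ffunP => p; case: (path2_cases p) => ->; norm2; by apply/eqP. Qed.
Lemma lact2_0 t : lact2 0 t = 0.
Proof. by apply/ffunP => p; rewrite !ffunE mul0r. Qed.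

Lemma core nabla sigma : is_bimod_conn nabla sigma ->
  [/\ nabla (e1 v0 v1) = tens11 (d0 dl0) (e1 v0 v1) + lact2 dl0 (nabla (e1 v0 v1)),
      nabla (e1 v1 v0) = tens11 (d0 dl1) (e1 v1 v0) + lact2 dl1 (nabla (e1 v1 v0)),
      nabla (e1 v0 v1) = ract2 (nabla (e1 v0 v1)) dl1 + sigma (e2 v0 v1 v0),
      nabla (e1 v1 v0) = ract2 (nabla (e1 v1 v0)) dl0 + sigma (e2 v1 v0 v1)
      & sigma (e2 v0 v1 v0) = lact2 dl0 (sigma (e2 v0 v1 v0)) /\
      sigma (e2 v1 v0 v1) = lact2 dl1 (sigma (e2 v1 v0 v1))].
Proof.
case=> _ HL HR _ HS; split.
- by have := HL dl0 (e1 v0 v1); rewrite hl01.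
- by have := HL dl1 (e1 v1 v0); rewrite hl10.
- by have := HR dl1 (e1 v0 v1); rewrite hr01 ht01.
- by have := HR dl0 (e1 v1 v0); rewrite hr10 ht10.
- split; first by have [+ _] := HS dl0 (e2 v0 v1 v0); rewrite hs010.
  by have [+ _] := HS dl1 (e2 v1 v0 v1); rewrite hs101.
Qed.

Lemma sig0 nabla sigma : is_bimod_conn nabla sigma -> sigma 0 = 0.
Proof. case=> _ _ _ _ HS; have [h _] := HS 0 0; by rewrite !lact2_0 in h. Qed.

Lemma sig_id nabla sigma : is_bimod_conn nabla sigma ->
  sigma (e2 v0 v1 v0) = e2 v0 v1 v0 -> sigma (e2 v1 v0 v1) = e2 v1 v0 v1 -> sigma =1 id.
Proof.
move=> Hc; have Z := sig0 Hc; case: Hc => _ _ _ Hlin _ H0 H1 t.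
have E : t = [ffun i => t p010 * e2 v0 v1 v0 i] + ([ffun i => t p101 * e2 v1 v0 v1 i] + 0).
  apply/ffunP => p; case: (path2_cases p) => ->; norm; f2atoms; by apply/eqP.
by rewrite {1}E Hlin Hlin Z H0 H1 -E.
Qed.

Lemma fF (b : bool) : b = false -> b -> forall P : Prop, P.
Proof. by move=> ->. Qed.
Lemma ffalse (T : eqType) (a b : T) : a = b -> (a == b) = false -> forall P : Prop, P.
Proof. by move=> -> /negbT /negP. Qed.

Ltac substF2 := repeat match goal with
  | H : ?a = ?a |- _ => clear H
  | H : fun_of_fin ?f ?x = ?c |- _ => is_var f;
      lazymatch c with context [fun_of_fin f x] => fail | _ => idtac end;
      rewrite -> H in *; clear H
  end.
Ltac revF2 := repeat match goal with H : @eq _ _ _ |- _ => revert H end.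
Ltac closeF2 := repeat first [ let H := fresh in move=> H; exact: (@ffalse _ _ _ H (erefl false) _) | move=> _ ].

Lemma finish nabla sigma : is_bimod_conn nabla sigma ->
  let n01 := nabla (e1 v0 v1) in let n10 := nabla (e1 v1 v0) in
  let s0 := sigma (e2 v0 v1 v0) in let s1 := sigma (e2 v1 v0 v1) in
  [/\ n01 p010 = 1, n01 p101 = 1, n10 p010 = 1, n10 p101 = 1 &
     [/\ s0 p010 = 1, s0 p101 = 0, s1 p010 = 0 & s1 p101 = 1]] ->
  [/\ nabla (e1 v0 v1) = gmet, nabla (e1 v1 v0) = gmet & sigma =1 id].
Proof.
move=> Hc /= [a b c d [e f g h]]; split.
- apply/ffunP => p; case: (path2_cases p) => ->; [rewrite a | rewrite b]; norm; by apply/eqP.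
- apply/ffunP => p; case: (path2_cases p) => ->; [rewrite c | rewrite d]; norm; by apply/eqP.
- apply: (sig_id Hc).
  + apply/ffunP => p; case: (path2_cases p) => ->; [rewrite e | rewrite f]; norm; by apply/eqP.
  + apply/ffunP => p; case: (path2_cases p) => ->; [rewrite g | rewrite h]; norm; by apply/eqP.
Qed.

Lemma uniq_bij nabla sigma : is_bimod_conn nabla sigma -> bijective sigma ->
  [/\ nabla (e1 v0 v1) = gmet, nabla (e1 v1 v0) = gmet & sigma =1 id].
Proof.
move=> Hc Hb; apply: (finish Hc) => /=.
have [L1 L2 R1 R2 [S1 S2]] := core Hc.
have Z := sig0 Hc.
have N0 : (sigma (e2 v0 v1 v0) p010 == 0) && (sigma (e2 v0 v1 v0) p101 == 0) = false.
  apply/negbTE/negP => /andP [/eqP a /eqP b].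
  have : sigma (e2 v0 v1 v0) = sigma 0.
    rewrite Z; apply/ffunP => p; case: (path2_cases p) => ->; by rewrite ffunE.
  move/(bij_inj Hb)/(congr1 (fun t : Omega2 => t p010)); norm.
  move=> /eqP /(fF (erefl false)) H; exact: H.
have N1 : (sigma (e2 v1 v0 v1) p010 == 0) && (sigma (e2 v1 v0 v1) p101 == 0) = false.
  apply/negbTE/negP => /andP [/eqP a /eqP b].
  have : sigma (e2 v1 v0 v1) = sigma 0.
    rewrite Z; apply/ffunP => p; case: (path2_cases p) => ->; by rewrite ffunE.
  move/(bij_inj Hb)/(congr1 (fun t : Omega2 => t p101)); norm.
  move=> /eqP /(fF (erefl false)) H; exact: H.
move: N0 N1 (congr1 (fun t : Omega2 => t p010) L1) (congr1 (fun t : Omega2 => t p101) L1)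
  (congr1 (fun t : Omega2 => t p010) L2) (congr1 (fun t : Omega2 => t p101) L2)
  (congr1 (fun t : Omega2 => t p010) R1) (congr1 (fun t : Omega2 => t p101) R1)
  (congr1 (fun t : Omega2 => t p010) R2) (congr1 (fun t : Omega2 => t p101) R2)
  (congr1 (fun t : Omega2 => t p010) S1) (congr1 (fun t : Omega2 => t p101) S1)
  (congr1 (fun t : Omega2 => t p010) S2) (congr1 (fun t : Omega2 => t p101) S2).
clear L1 L2 R1 R2 S1 S2 Z Hb Hc.
move: (nabla (e1 v0 v1)) (nabla (e1 v1 v0)) (sigma (e2 v0 v1 v0)) (sigma (e2 v1 v0 v1)) => n01 n10 s0 s1.
norm2; rewrite ?mul0r ?mul1r ?mulr0 ?mulr1 ?addr0 ?add0r; intros; substF2; revF2; f2atoms; closeF2; split; try split; by apply/eqP.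
Qed.

Lemma uniq_mc nabla sigma : is_bimod_conn nabla sigma -> metric_compatible nabla sigma ->
  [/\ nabla (e1 v0 v1) = gmet, nabla (e1 v1 v0) = gmet & sigma =1 id].
Proof.
move=> Hc Hm; apply: (finish Hc) => /=.
have [L1 L2 R1 R2 [S1 S2]] := core Hc.
have M1 := congr1 (fun t : Omega3 => t q0101) Hm.
have M2 := congr1 (fun t : Omega3 => t q1010) Hm.
rewrite /= /metric_compatible /sigma_id in M1 M2.
do 3! rewrite ?sum_ffunE ?sum2 ?sum3 ?ffunE /= in M1 M2.
rewrite ?coef1_01 ?coef1_10 ?coef1_00 ?coef1_11 ?coef2_010 ?coef2_101 in M1 M2.
move: M1 M2 (congr1 (fun t : Omega2 => t p010) L1) (congr1 (fun t : Omega2 => t p101) L1)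
  (congr1 (fun t : Omega2 => t p010) L2) (congr1 (fun t : Omega2 => t p101) L2)
  (congr1 (fun t : Omega2 => t p010) R1) (congr1 (fun t : Omega2 => t p101) R1)
  (congr1 (fun t : Omega2 => t p010) R2) (congr1 (fun t : Omega2 => t p101) R2)
  (congr1 (fun t : Omega2 => t p010) S1) (congr1 (fun t : Omega2 => t p101) S1)
  (congr1 (fun t : Omega2 => t p010) S2) (congr1 (fun t : Omega2 => t p101) S2).
clear L1 L2 R1 R2 S1 S2 Hm Hc.
move: (nabla (e1 v0 v1)) (nabla (e1 v1 v0)) (sigma (e2 v0 v1 v0)) (sigma (e2 v1 v0 v1)) => n01 n10 s0 s1.
norm2; rewrite ?mul0r ?mul1r ?mulr0 ?mulr1 ?addr0 ?add0r; intros; substF2; revF2; f2atoms; closeF2; split; try split; by apply/eqP.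
Qed.

Theorem lemma4p1 :
  (exists nabla : Omega1 -> Omega2,
      [/\ nabla (e1 v0 v1) = gmet, nabla (e1 v1 v0) = gmet,
          is_bimod_conn nabla id & bijective (@id Omega2)]
      /\ [/\ metric_compatible nabla id,
             (forall w, torsion nabla w = 0) &
             (forall w, curvature nabla w = 0)])
  /\ (forall (nabla : Omega1 -> Omega2) (sigma : Omega2 -> Omega2),
        is_bimod_conn nabla sigma -> bijective sigma ->
        [/\ nabla (e1 v0 v1) = gmet, nabla (e1 v1 v0) = gmet & sigma =1 id])
  /\ (forall (nabla : Omega1 -> Omega2) (sigma : Omega2 -> Omega2),
        is_bimod_conn nabla sigma -> metric_compatible nabla sigma ->
        [/\ nabla (e1 v0 v1) = gmet, nabla (e1 v1 v0) = gmet & sigma =1 id]).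
Proof.
split; last split.
- exists cN; split; split.
  + exact: ex1.
  + exact: ex2.
  + exact: ex_conn.
  + by exists id.
  + exact: ex_mc.
  + exact: ex_tor.
  + exact: ex_curv.
- move=> nabla sigma; exact: uniq_bij.
- move=> nabla sigma; exact: uniq_mc.
Qed.
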